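(* Let $d\ge1$, $M>0$, and let $f:[0,1]^d\to\mathbb{R}$ satisfy $|f(x)-f(y)|\le M\|x-y\|_\infty$ for all $x,y\in[0,1]^d$; let $g(x)=f(x)\bmod 1$. Let $m>1$ be an integer, $x_i=\frac{i-1}{m-1}$ for $i\in[m]$, and for $\mathbf{i}=(i_1,\dots,i_d)\in[m]^d$ let $x_{\mathbf i}=(x_{i_1},\dots,x_{i_d})$; let $\mathcal X=\{x_{\mathbf i}:\mathbf i\in[m]^d\}$. Let $\delta\in[0,1/2]$ and $\hat g:[0,1]^d\to[0,1)$ satisfy $d_w(\hat g(x_{\mathbf i}),g(x_{\mathbf i}))\le\delta$ for all $\mathbf i\in[m]^d$. Define values $\tilde f(x_{\mathbf i})$ for all $\mathbf i\in[m]^d$ by the following sequential procedure: set $\tilde f(x_{(1,\dots,1)})=\hat g(x_{(1,\dots,1)})$ (the corner $(0,\dots,0)$); then for $j=1,\dots,d$, for each $(i_1,\dots,i_{j-1})\in[m]^{j-1}$ (a single empty tuple when $j=1$), with $i_{j+1}=\dots=i_d=1$, and for $i_j=2,\dots,m$ in increasing order, set $$\tilde f(x_{\mathbf i})=\tilde f(x_{\mathbf i-e_j})+\begin{cases}D_j\hat g(x_{\mathbf i}) & \text{if } |D_j\hat g(x_{\mathbf i})|<1/2,\\ 1+D_j\hat g(x_{\mathbf i}) & \text{if } D_j\hat g(x_{\mathbf i})<-1/2,\\ -1+D_j\hat g(x_{\mathbf i}) & \text{if } D_j\hat g(x_{\mathbf i})>1/2,\end{cases}$$ where $\mathbf i=(i_1,\dots,i_j,1,\dots,1)$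 and $\mathbf i-e_j=(i_1,\dots,i_j-1,1,\dots,1)$. If $2\delta+\frac{M}{m-1}<\frac12$, then there exists $q^\star\in\mathbb{Z}$ such that $|\tilde f(x_{\mathbf i})+q^\star-f(x_{\mathbf i})|\le\delta$ for all $x_{\mathbf i}\in\mathcal X$.
   Context: For $a\in\mathbb{R}$, $a\bmod1=a-\lfloor a\rfloor\in[0,1)$. The wrap-around distance on $[0,1)$ is $d_w(a,b)=\min(|a-b|,1-|a-b|)$. $[m]=\{1,\dots,m\}$. For a function $h$ on the grid and $\mathbf i\in[m]^d$ with $i_j>1$, $D_jh(x_{\mathbf i})=h(x_{i_1},\dots,x_{i_j},\dots,x_{i_d})-h(x_{i_1},\dots,x_{i_j-1},\dots,x_{i_d})$. The procedure visits every grid point exactly once, each after its predecessor along coordinate $j$ has been assigned. *)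

(* Defs.v *)
From mathcomp Require Import all_boot all_order all_algebra.
From mathcomp Require Import reals.
Set Implicit Arguments. Unset Strict Implicit. Unset Printing Implicit Defensive.
Import Order.TTheory GRing.Theory Num.Theory.
Local Open Scope ring_scope.

Definition mod1 (R : realType) (a : R) : R := a - (Num.floor a)%:~R.

Definition dw (R : realType) (a b : R) : R := Num.min `|a - b| (1 - `|a - b|).

Definition supnorm (R : realType) (d : nat) (x : 'I_d -> R) : R :=
  \big[Num.max/0]_(k < d) `|x k|.

Definition in_cube (R : realType) (d : nat) (x : 'I_d -> R) : Prop :=
  forall k, 0 <= x k <= 1.

(* grid point x_i, with 0-based index i : 'I_d -> 'I_m, coordinate i_k/(m-1) *)
Definition gridpt (R : realType) (d m : nat) (i : {ffun 'I_d -> 'I_m}) : 'I_d -> R :=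
  fun k => (i k)%:R / (m.-1)%:R.

(* Main.v *)
Require Import Defs.
From mathcomp Require Import all_boot all_order all_algebra.
From mathcomp Require Import reals ring lra zify.
Import Order.TTheory GRing.Theory Num.Theory.
Local Open Scope ring_scope.

Lemma int_small (R : realType) (n : int) : `|n%:~R : R| < 1 -> n = 0.
Proof.
rewrite -intr_norm => h.
have : (`|n| < 1)%R by rewrite -(ltr_int R); exact: h.
by clear h; case: n => [[|p]|p].
Qed.

Lemma dwk (R : realType) (a b delta : R) : 0 <= a < 1 ->
  dw a (mod1 b) <= delta -> exists k : int, `|a - b - k%:~R| <= delta.
Proof.
move=> /andP[a0 a1]; rewrite /dw /mod1.
have fl := floor_le b; have fu := floorD1_gt b; rewrite intrD in fu.
set c := (Num.floor b)%:~R in fl fu *.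
rewrite ge_min => /orP[h|h].
  by exists (- Num.floor b); rewrite intrN -/c; have -> : a - b - - c = a - (b - c) by ring.
have [hp|hn] := leP 0 (a - (b - c)).
  rewrite ger0_norm // in h.
  exists (- Num.floor b + 1); rewrite intrD intrN -/c ler_norml; apply/andP; split; lra.
rewrite ltr0_norm // in h.
exists (- Num.floor b - 1); rewrite intrD !intrN -/c ler_norml; apply/andP; split; lra.
Qed.

Theorem mainTheorem4 (R : realType) (d m : nat) (M delta : R)
  (f ghat : ('I_d -> R) -> R) (ft : {ffun 'I_d -> 'I_m} -> R) :
  (0 < d)%N -> 0 < M ->
  (forall x y, in_cube x -> in_cube y ->
     `|f x - f y| <= M * supnorm (fun k => x k - y k)) ->
  (1 < m)%N ->
  0 <= delta <= 2^-1 ->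
  (forall x, in_cube x -> 0 <= ghat x < 1) ->
  (forall i : {ffun 'I_d -> 'I_m}, dw (ghat (gridpt R i)) (mod1 (f (gridpt R i))) <= delta) ->
  (* the procedure: corner *)
  (forall i : {ffun 'I_d -> 'I_m}, (forall k, i k = 0 :> nat) ->
     ft i = ghat (gridpt R i)) ->
  (* the procedure: step along coordinate j, from i' = i - e_j to i,
     where i = (i_1,..,i_j,1,..,1) with i_j > 1 *)
  (forall (j : 'I_d) (i i' : {ffun 'I_d -> 'I_m}),
     (forall k : 'I_d, (j < k)%N -> i k = 0 :> nat) ->
     (i j = (i' j).+1 :> nat) ->
     (forall k, k != j -> i' k = i k) ->
     let D := ghat (gridpt R i) - ghat (gridpt R i') in
     [/\ `|D| < 2^-1 -> ft i = ft i' + D,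
         D < - 2^-1 -> ft i = ft i' + (1 + D)
       & D > 2^-1 -> ft i = ft i' + (-1 + D)]) ->
  2 * delta + M / (m.-1)%:R < 2^-1 ->
  exists q : int, forall i : {ffun 'I_d -> 'I_m}, `|ft i + q%:~R - f (gridpt R i)| <= delta.
Proof.
move=> d0 M0 Lip m1 /andP[de0 de1] ghR dwH corner step hsmall.
have m1R : (0 < (m.-1)%:R :> R) by rewrite ltr0n -subn1 subn_gt0.
have cube : forall i : {ffun 'I_d -> 'I_m}, in_cube (gridpt R i).
  move=> i k; rewrite /gridpt divr_ge0 ?ler0n //= ler_pdivrMr // mul1r ler_nat.
  have := ltn_ord (i k); lia.
have gh i := ghR _ (cube i).
have K i : exists k : int, `|ghat (gridpt R i) - f (gridpt R i) - k%:~R| <= delta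
  := @dwk R _ _ _ (gh i) (dwH i).
pose z := Ordinal (ltn_trans (ltnSn 0) m1).
pose i0 := [ffun _ : 'I_d => z].
have [k0 hk0] := K i0.
exists (- k0).
pose Q i := exists k : int, `|ghat (gridpt R i) - f (gridpt R i) - k%:~R| <= delta
   /\ ft i + (- k0)%:~R = ghat (gridpt R i) - k%:~R.
suff HQ : forall i, Q i.
  by move=> i; have [k [h1 h2]] := HQ i; rewrite h2 addrAC.
have zero_case : forall i : {ffun 'I_d -> 'I_m}, (forall k, i k = 0 :> nat) -> Q i.
  move=> i iz.
  have -> : i = i0 by apply/ffunP => k; apply/val_inj; rewrite ffunE /= iz.
  exists k0; split => //; rewrite corner ?intrN //.
  by move=> k; rewrite ffunE.
suff main : forall n (i : {ffun 'I_d -> 'I_m}), (\sum_(k < d) (i k : nat) < n)%N -> Q i.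
  by move=> i; apply: (main _ i (ltnSn _)).
elim=> [|n IH] i hi; first by [].
case: (boolP [exists k, (i k : nat) != 0%N]); last first.
  by move/existsPn => hz; apply: zero_case => k; apply/eqP; rewrite -[_ == _]negbK hz.
move=> /existsP [k1 hk1].
case: (@arg_maxnP _ k1 (fun k => (i k : nat) != 0%N) (fun k => (k : nat)) hk1) => j hj jmax.
have ijpos : (0 < i j)%N by rewrite lt0n.
pose p := Ordinal (leq_ltn_trans (leq_pred (i j)) (ltn_ord (i j))).
pose i' := [ffun k => if k == j then p else i k].
have H2 : i j = (i' j).+1 :> nat by rewrite ffunE eqxx /= prednK.
have H3 : forall k, k != j -> i' k = i k by move=> k kj; rewrite ffunE (negbTE kj).
have H1 : forall k : 'I_d, (j < k)%N -> i k = 0 :> nat.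
  move=> k jk; apply/eqP; apply: contraTT jk => nz; rewrite -leqNgt; exact: jmax.
have Hs : (\sum_(k < d) (i' k : nat) < n)%N.
  have e1 : (\sum_(k < d) (i k : nat) = i j + \sum_(k < d | k != j) (i k : nat))%N
    by rewrite (bigD1 j).
  have e2 : (\sum_(k < d) (i' k : nat) = i' j + \sum_(k < d | k != j) (i k : nat))%N.
    rewrite (bigD1 j) //=; congr (_ + _)%N; apply: eq_bigr => k kj; by rewrite H3.
  by move: hi; rewrite e1 e2 H2 addSn ltnS.
have [k' [hk'1 hk'2]] := IH i' Hs.
have [k hk] := K i.
exists k; split => //.
case: (step j i i' H1 H2 H3) => s1 s2 s3.
set a := ghat (gridpt R i) in hk s1 s2 s3 *.
set a' := ghat (gridpt R i') in hk'1 hk'2 s1 s2 s3 *.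
set b := f (gridpt R i) in hk.
set b' := f (gridpt R i') in hk'1.
set e := M / (m.-1)%:R in hsmall.
have Lb : `|b - b'| <= e.
  apply: le_trans (Lip _ _ (cube i) (cube i')) _.
  rewrite /e ler_wpM2l ?(ltW M0) //.
  rewrite /supnorm; elim/big_ind: _ => [|x y hx hy|kk _].
  - by rewrite invr_ge0 ltW.
  - by rewrite ge_max hx hy.
  rewrite /gridpt -mulrBl; case: (eqVneq kk j) => [->|kj].
    rewrite H2 -addn1 natrD addrAC subrr add0r mul1r ger0_norm //.
    by rewrite invr_ge0 ltW.
  by rewrite H3 // subrr mul0r normr0 invr_ge0 ltW.
have /andP[ga1 ga2] : 0 <= a < 1 := gh i.
have /andP[ga1' ga2'] : 0 <= a' < 1 := gh i'.
move: hk hk'1 Lb; rewrite !ler_norml => /andP[u1 u2] /andP[u3 u4] /andP[u5 u6].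
rewrite intrN in hk'2.
have E r : (r = k - k')%R -> (r%:~R : R) = k%:~R - k'%:~R by move->; rewrite intrD intrN.
have i1 : ((1:int)%:~R : R) = 1 by [].
have [Dl|Dg] := ltrP (a - a') (- 2^-1).
  have : k - k' + 1 = 0.
    apply: (@int_small R); rewrite intrD intrD intrN ?i1 ltr_norml; apply/andP; split; lra.
  move=> /(congr1 (fun z : int => z%:~R : R)); rewrite /= !intrD intrN ?i1 => ee.
  have := s2 Dl; lra.
have [Dh|Dh] := ltrP (2^-1) (a - a').
  have : k - k' - 1 = 0.
    apply: (@int_small R); rewrite intrD intrD !intrN ?i1 ltr_norml; apply/andP; split; lra.
  move=> /(congr1 (fun z : int => z%:~R : R)); rewrite /= !intrD !intrN ?i1 => ee.
  have := s3 Dh; lra.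
have : k - k' = 0.
  apply: (@int_small R); rewrite intrD intrN ?i1 ltr_norml; apply/andP; split; lra.
move=> /(congr1 (fun z : int => z%:~R : R)); rewrite /= !intrD !intrN ?i1 => ee.
have Dlt : `|a - a'| < 2^-1 by rewrite ?i1 ltr_norml; apply/andP; split; lra.
have := s1 Dlt; lra.
Qed.
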